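(* Let $A$ be a nonempty finite set with $|A|=n$, let $\Sigma\in\mathbb{R}$, and let $d$ be a metric on $A$. Then the function $\sigma:A^2\to\mathbb{R}$ defined by $$\sigma(x,y)=d(x,\cdot)+d(y,\cdot)-d(x,y)-d(\cdot,\cdot)+\frac{\Sigma}{n}$$ is a $\Sigma$-proximity on $A$.
   Context: A metric on $A$ is a function $d:A^2\to\mathbb{R}$ such that for all $x,y,z\in A$: $d(x,y)=0$ iff $x=y$, and $d(x,y)+d(x,z)-d(y,z)\ge 0$. Notation: $d(x,\cdot)=\frac1n\sum_{t\in A}d(x,t)$ and $d(\cdot,\cdot)=\frac1{n^2}\sum_{s,t\in A}d(s,t)$. For a real number $\Sigma$, a function $\sigma:A^2\to\mathbb{R}$ is a $\Sigma$-proximity on $A$ if for all $x,y,z\in A$: (1) $\sum_{t\in A}\sigma(x,t)=\Sigma$; (2) $\sigma(x,y)+\sigma(x,z)-\sigma(y,z)\le\sigma(x,x)$, with strict inequality whenever $z=y$ and $x\ne y$. *)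

(* Defs.v *)
From HB Require Import structures.
From mathcomp Require Import all_boot all_order all_algebra.
From mathcomp Require Import reals.
Set Implicit Arguments. Unset Strict Implicit. Unset Printing Implicit Defensive.
Import Order.TTheory GRing.Theory Num.Theory.
Local Open Scope ring_scope.

Definition is_metric (R : realType) (A : finType) (d : A -> A -> R) : Prop :=
  forall x y z : A, (d x y = 0 <-> x = y) /\ 0 <= d x y + d x z - d y z.

Definition drow (R : realType) (A : finType) (d : A -> A -> R) (x : A) : R :=
  (\sum_(t : A) d x t) / #|A|%:R.

Definition dall (R : realType) (A : finType) (d : A -> A -> R) : R :=
  (\sum_(s : A) \sum_(t : A) d s t) / (#|A|%:R ^+ 2).

Definition is_proximity (R : realType) (A : finType) (Sig : R)
    (sigma : A -> A -> R) : Prop :=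
  forall x y z : A,
    \sum_(t : A) sigma x t = Sig /\
    sigma x y + sigma x z - sigma y z <= sigma x x /\
    (z = y -> x <> y -> sigma x y + sigma x z - sigma y z < sigma x x).

(* Main.v *)
Require Import Defs.
From HB Require Import structures.
From mathcomp Require Import all_boot all_order all_algebra.
From mathcomp Require Import reals.
From mathcomp Require Import ring lra.
Import Order.TTheory GRing.Theory Num.Theory.
Local Open Scope ring_scope.

Theorem proposition2 (R : realType) (A : finType) (Sig : R) (d : A -> A -> R) :
  (0 < #|A|)%N ->
  is_metric d ->
  is_proximity Sig
    (fun x y => drow d x + drow d y - d x y - dall d + Sig / #|A|%:R).
Proof.
move=> hA hd x y z.
have n0 : (#|A|%:R : R) != 0 by rewrite pnatr_eq0 -lt0n.
have d0 : forall u, d u u = 0 by move=> u; apply/(proj1 (hd u u u)).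
have dge : forall u v, 0 <= d u v.
  by move=> u v; have := proj2 (hd u v v); rewrite d0; lra.
split.
  rewrite big_split /= big_split /= big_split /= big_split /= !sumrN !sumr_const.
  have cA : (#|(xpredT : pred A)| = #|A|)%N by apply: eq_card.
  rewrite cA.
  have -> : \sum_(i : A) drow d i = #|A|%:R * dall d.
    rewrite /drow /dall -mulr_suml.
    move: (\sum_i \sum_t d i t) n0 => S2; move: (#|A|%:R : R) => N nz; by field.
  rewrite -[drow d x *+ _]mulr_natr -[dall d *+ _]mulr_natr -[_ / _ *+ #|A|]mulr_natr /drow.
  move: (\sum_t d x t) (dall d) n0 => S D; move: (#|A|%:R : R) => N nz; by field.
have := proj2 (hd x y z); rewrite d0.
split; first lra.
move=> -> hxy; rewrite d0.
have h1 : d x y != 0 by apply/eqP => /(proj1 (hd x y x)) /hxy.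
have : 0 < d x y by rewrite lt0r h1 dge.
lra.
Qed.
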